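(* Let $(L_n)_{n\in\mathbb N}$ be an integer sequence with $L_n\ge\tilde c\log n$ for some $\tilde c>0$ and all $n$. Then there is a sequence $(\delta_n)$ with $\delta_n\to0$ such that, for all $n$ large enough, with $\mathrm{GW}$-probability at least $1-n^{-2}$ the following holds: for every site $x\in\mathcal Z_{\lceil L_n(1+\delta_n)\rceil}$ there exists a site $y$ on the directed path from the root to $x$ with $|y|\ge L_n$ and $\deg(y)\le\log\log n$.
   Context: $\mu$: offspring distribution on $\mathbb N_0$ with $p_0=0$ and mean $\mathfrak m=\sum_\ell\ell\mu(\ell)\in(1,\infty)$; $\mathrm{GW}$ the law of the Galton--Watson tree with offspring distribution $\mu$, root $o$, edges directed from parent to child; $|y|$ distance to $o$, $\mathcal Z_\ell$ the $\ell$-th generation; $\deg$ the degree in the tree. *)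

(* Defs.v *)
From HB Require Import structures.
From mathcomp Require Import all_boot all_order all_algebra.
From mathcomp Require Import all_classical all_reals all_analysis.
Set Implicit Arguments. Unset Strict Implicit. Unset Printing Implicit Defensive.
Import Order.TTheory GRing.Theory Num.Theory.
Import numFieldNormedType.Exports.
Local Open Scope classical_set_scope.
Local Open Scope ring_scope.

Definition offspring_dist (R : realType) (mu : nat -> R) : Prop :=
  (forall l, 0 <= mu l) /\
  series mu @ \oo --> (1 : R) /\
  mu 0%N = 0 /\
  cvgn (series (fun l => l%:R * mu l)) /\
  1 < limn (series (fun l => l%:R * mu l)).

(* Ulam-Harris encoding of the Galton-Watson tree: vertices are words
   u : seq nat; the root o is [::]; xi u w is the number of children of u
   (the children of u are rcons u i, i < xi u w).  *)
Definition in_tree (T : Type) (xi : seq nat -> T -> nat) (w : T) (u : seq nat)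
  : Prop :=
  forall i, (i < size u)%N -> (nth 0%N u i < xi (take i u) w)%N.

(* degree of a vertex in the (undirected) tree: children + parent (if any) *)
Definition tdeg (T : Type) (xi : seq nat -> T -> nat) (w : T) (u : seq nat)
  : nat := (xi u w + (u != [::]))%N.

(* (xi u)_u is an i.i.d. family of N-valued random variables with law mu:
   for every finite list of distinct words and values, the joint
   probability factorizes into the product of mu's. *)
Definition iid_offspring (R : realType) (d : measure_display)
  (T : measurableType d) (P : probability T R) (mu : nat -> R)
  (xi : seq nat -> T -> nat) : Prop :=
  (forall u k, measurable [set w | xi u w = k]) /\
  (forall (us : seq (seq nat)) (ks : seq nat), uniq us -> size ks = size us ->
     P (\bigcap_(i in [set i | (i < size us)%N])
          [set w | xi (nth [::] us i) w = nth 0%N ks i])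
     = (\prod_(i < size us) mu (nth 0%N ks i))%:E).

(* Main.v *)
Require Import Defs.
From HB Require Import structures.
From mathcomp Require Import all_boot all_order all_algebra.
From mathcomp Require Import all_classical all_reals all_analysis.
From mathcomp Require Import zify ring lra.
From Stdlib Require Import Lia Classical.
Set Implicit Arguments. Unset Strict Implicit. Unset Printing Implicit Defensive.
Import Order.TTheory GRing.Theory Num.Theory.
Import numFieldNormedType.Exports.
Local Open Scope classical_set_scope.
Local Open Scope ring_scope.


Section Prob.
Context (R : realType) (d : measure_display) (T : measurableType d)
  (P : probability T R) (mu : nat -> R) (xi : seq nat -> T -> nat).

Definition Cyl (us : seq (seq nat)) (ks : seq nat) : set T :=
  [set w | forall i, (i < size us)%N -> xi (nth [::] us i) w = nth 0%N ks i].

Lemma CylE us ks : \bigcap_(i in [set i | (i < size us)%N])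
          [set w | xi (nth [::] us i) w = nth 0%N ks i] = Cyl us ks.
Proof. by []. Qed.

Lemma Cyl_cons u us k ks :
  Cyl (u :: us) (k :: ks) = [set w | xi u w = k] `&` Cyl us ks.
Proof.
apply/seteqP; split=> w /=.
  by move=> H; split; [exact: (H 0%N)|move=> i hi; exact: (H i.+1 hi)].
by move=> [H1 H2] [|i] //= hi; exact: H2.
Qed.

Lemma setI_bigsetU (I : Type) (r : seq I) (A : set T) (F : I -> set T) :
  A `&` \big[setU/set0]_(i <- r) F i = \big[setU/set0]_(i <- r) (A `&` F i).
Proof.
elim: r => [|a r IH]; first by rewrite !big_nil setI0.
by rewrite !big_cons setIUr IH.
Qed.

Fixpoint V (cons : nat -> nat -> bool) (N : nat) (u : seq nat) (j : nat)
  {struct j} : set T :=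
  \big[setU/set0]_(k < N)
    (if cons (size u) k then [set w | xi u w = k] `&`
       match j with 0%N => setT
       | j'.+1 => \big[setU/set0]_(x < k) V cons N (rcons u x) j' end
     else set0).

Hypothesis hmeas : forall u k, measurable [set w | xi u w = k].

Lemma Cyl_cons' u us ks :
  Cyl (u :: us) ks = [set w | xi u w = head 0%N ks] `&` Cyl us (behead ks).
Proof.
case: ks => [|k ks]; last exact: Cyl_cons.
apply/seteqP; split=> w /=.
  by move=> H; split; [exact: (H 0%N)|move=> i hi; rewrite nth_nil; exact: (H i.+1 hi)].
move=> [H1 H2] i; case: i => [|i] /= hi; first by []. by rewrite H2 // nth_nil.
Qed.

Lemma Cyl_meas us ks : measurable (Cyl us ks).
Proof.
elim: us ks => [|u us IH] ks.
  by rewrite (_ : Cyl _ _ = setT) //; apply/seteqP; split.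
by rewrite Cyl_cons'; apply: measurableI.
Qed.

Lemma V_meas cons N j u : measurable (V cons N u j).
Proof.
elim: j u => [|j IH] u /=; apply: bigsetU_measurable => k _;
  case: ifP => _ //; apply: measurableI => //.
exact: bigsetU_measurable.
Qed.
Lemma Boole_seq (I : Type) (r : seq I) (F : I -> set T) :
  (forall i, measurable (F i)) ->
  (P (\big[setU/set0]_(i <- r) F i) <= \sum_(i <- r) P (F i))%E.
Proof.
move=> mF; elim: r => [|a r IH]; first by rewrite !big_nil measure0.
rewrite !big_cons; apply: le_trans (measureU2 _ _ _) _ => //.
  by apply: bigsetU_measurable.
exact: leeD.
Qed.

Lemma V_bound (cons : nat -> nat -> bool) (N : nat) (rho : nat -> R)
  (mu0 : forall k, 0 <= mu k)
  (hmu1 : forall N, \sum_(k < N) mu k <= 1)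
  (hrho : forall i N, \sum_(k < N | cons i k) k%:R * mu k <= rho i)
  (rho0 : forall i, 0 <= rho i)
  (hiid : forall us ks, uniq us -> size ks = size us ->
     P (Cyl us ks) = (\prod_(i < size us) mu (nth 0%N ks i))%:E) :
  forall j u us ks, uniq us -> size ks = size us ->
  (forall v, v \in us -> ~~ prefix u v) ->
  (P (Cyl us ks `&` V cons N u j) <=
    (\prod_(i < size us) mu (nth 0%N ks i) * \prod_(t < j) rho (size u + t))%:E)%E.
Proof.
have Pr0 : forall (us : seq (seq nat)) (ks : seq nat), 0 <= \prod_(i < size us) mu (nth 0%N ks i).
  by move=> us ks; apply: prodr_ge0 => i _.
have Prc : forall (u : seq nat) (us : seq (seq nat)) (k : nat) (ks : seq nat), \prod_(i < size (u :: us)) mu (nth 0%N (k :: ks) i)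
   = mu k * \prod_(i < size us) mu (nth 0%N ks i).
  by move=> u us k ks; rewrite /= big_ord_recl.
have uU : forall (u : seq nat) (us : seq (seq nat)), uniq us -> (forall v, v \in us -> ~~ prefix u v) ->
   uniq (u :: us).
  by move=> u us Hu Hp /=; rewrite Hu andbT; apply/negP => /Hp; rewrite prefix_refl.
elim => [|j IH] u us ks Hu Hs Hp.
  rewrite /= setI_bigsetU.
  apply: le_trans (Boole_seq _ _) _.
    move=> i; apply: measurableI; first exact: Cyl_meas.
    by case: ifP => _ //; apply: measurableI.
  set Pr := \prod_(i < size us) mu (nth 0%N ks i).
  have Ht : forall k : 'I_N, (P (Cyl us ks `&` (if cons (size u) k then
      [set w | xi u w = k] `&` setT else set0)) <=
      (if cons (size u) k then mu k * Pr else 0)%:E)%E.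
    move=> k; case: ifP => _; last by rewrite setI0 measure0.
    rewrite setIT setIC -Cyl_cons hiid /=; last by rewrite Hs.
      by rewrite big_ord_recl.
    exact: uU.
  apply: le_trans (lee_sum _ (fun k _ => Ht k)) _.
  rewrite sumEFin lee_fin big_ord0 mulr1.
  apply: le_trans (_ : \sum_(k < N) mu k * Pr <= _).
    by apply: ler_sum => k _; case: ifP => _ //; apply: mulr_ge0; [exact: mu0|exact: Pr0].
  rewrite -mulr_suml -[X in _ <= X]mul1r; apply: ler_wpM2r; [exact: Pr0|exact: hmu1].
rewrite /= setI_bigsetU.
apply: le_trans (Boole_seq _ _) _.
  move=> i; apply: measurableI; first exact: Cyl_meas.
  case: ifP => _ //; apply: measurableI => //.
  by apply: bigsetU_measurable => *; apply: V_meas.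
set Pr := \prod_(i < size us) mu (nth 0%N ks i).
set G := \prod_(t < j) rho ((size u).+1 + t).
have G0 : 0 <= G by apply: prodr_ge0.
have Ht : forall k : 'I_N, (P (Cyl us ks `&` (if cons (size u) k then
      [set w | xi u w = k] `&` \big[setU/set0]_(x < k) V cons N (rcons u x) j
      else set0)) <=
      (if cons (size u) k then k%:R * mu k * (Pr * G) else 0)%:E)%E.
  move=> k; case: ifP => _; last by rewrite setI0 measure0.
  rewrite setIA [Cyl us ks `&` _]setIC -Cyl_cons setI_bigsetU.
  apply: le_trans (Boole_seq _ _) _.
    by move=> i; apply: measurableI; [exact: Cyl_meas|exact: V_meas].
  have Hx : forall x : 'I_k, (P (Cyl (u :: us) (nat_of_ord k :: ks) `&` V cons N (rcons u x) j)
     <= (mu k * Pr * G)%:E)%E.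
    move=> x; apply: le_trans (IH _ _ _ _ _ _) _.
    - exact: uU.
    - by rewrite /= Hs.
    - move=> v; rewrite inE => /orP [/eqP ->|/Hp Hv].
        apply/negP => /prefixP [s] /(congr1 size); rewrite size_cat size_rcons.
        by lia.
      apply/negP => Hv'; move/negP: Hv; apply; apply: prefix_trans Hv'.
      exact: prefix_rcons.
    by rewrite Prc size_rcons.
  apply: le_trans (lee_sum _ (fun x _ => Hx x)) _.
  by rewrite sumEFin lee_fin sumr_const card_ord -[_ *+ k]mulr_natl !mulrA.
apply: le_trans (lee_sum _ (fun k _ => Ht k)) _.
rewrite sumEFin lee_fin big_ord_recl.
have -> : \prod_(i < j) rho (size u + lift ord0 i) = G.
  by apply: eq_bigr => i _; congr rho; rewrite lift0; lia.
have -> : rho (size u + @ord0 j) = rho (size u) by congr rho; exact: addn0.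
apply: le_trans (_ : \sum_(k < N | cons (size u) k) k%:R * mu k * (Pr * G) <= _).
  by rewrite [X in _ <= X]big_mkcond.
rewrite -mulr_suml mulrCA; apply: ler_wpM2l; first exact: Pr0.
by apply: ler_wpM2r => //; exact: hrho.
Qed.

Lemma in_bigsetU (I : eqType) (r : seq I) (F : I -> set T) w :
  (\big[setU/set0]_(i <- r) F i) w <-> exists2 i, i \in r & F i w.
Proof.
elim: r => [|a r IH]; first by rewrite big_nil; split => // -[].
rewrite big_cons; split.
  case=> [H|/IH [i Hi Hw]]; first by exists a => //; rewrite inE eqxx.
  by exists i => //; rewrite inE Hi orbT.
move=> [i]; rewrite inE => /orP [/eqP ->|Hi] Hw; first by left.
by right; apply/IH; exists i.
Qed.

Lemma in_bigsetU_ord n (F : 'I_n -> set T) w :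
  (\big[setU/set0]_(i < n) F i) w <-> exists i, F i w.
Proof.
rewrite in_bigsetU; split; first by case=> i _ H; exists i.
by case=> i H; exists i => //; rewrite mem_index_enum.
Qed.

Lemma V_char (cons : nat -> nat -> bool) (N : nat) w j : forall u,
  V cons N u j w <-> exists y : seq nat, [/\ size y = j,
    (forall i, (i <= j)%N -> (cons (size u + i)%N (xi (u ++ take i y) w) : Prop) /\ (xi (u ++ take i y) w < N)%N) &
    (forall i, (i < j)%N -> (nth 0%N y i < xi (u ++ take i y) w)%N)].
Proof.
elim: j => [|j IH] u /=; rewrite in_bigsetU_ord.
  split.
    case=> k; case: ifP => // Hc [Hk _]; exists [::]; split => //.
    by move=> i; rewrite leqn0 => /eqP ->; rewrite addn0 ?take0 ?cats0 Hk.
  case=> y [_ H _]; have [H1 H2] := H 0%N (leqnn 0).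
  rewrite addn0 take0 cats0 in H1 H2.
  by exists (Ordinal H2) => /=; rewrite H1.
split.
  case=> k; case: ifP => // Hc [Hk]; rewrite in_bigsetU_ord => -[x].
  move/IH => [y [Hy H1 H2]]; exists (nat_of_ord x :: y); split => //=.
  - by rewrite Hy.
  - case=> [|i] Hi; first by rewrite addn0 ?take0 ?cats0 Hk; split => //.
    by rewrite /= -cat_rcons addnS -addSn -(size_rcons u x); apply: H1.
  - case=> [|i] Hi; first by rewrite ?take0 ?cats0 Hk; exact: ltn_ord.
    by rewrite /= -(cat_rcons _ u); apply: H2.
case=> -[|x y] [//= Hy H1 H2].
have [Hc0 HN] := H1 0%N isT; rewrite addn0 take0 cats0 in Hc0 HN.
have Hx := H2 0%N isT; rewrite take0 cats0 /= in Hx.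
exists (Ordinal HN); rewrite /= Hc0; split => //.
rewrite in_bigsetU_ord; exists (Ordinal Hx); apply/IH.
exists y; split.
- by case: Hy.
- move=> i Hi; have := H1 i.+1 Hi.
  by rewrite /= -cat_rcons size_rcons addnS.
- move=> i Hi; have := H2 i.+1 Hi.
  by rewrite /= -cat_rcons.
Qed.

Definition consf (l : nat) (th : R) (i k : nat) : bool :=
  (l <= i)%N ==> (th < (k.+1)%:R).

Lemma tdeg_take w x k : (1 <= k)%N -> (k <= size x)%N ->
  tdeg xi w (take k x) = (xi (take k x) w).+1.
Proof.
move=> k1 kx; rewrite /tdeg; suff -> : (take k x != [::]) = true by rewrite addn1.
apply/negP => /eqP H; have := size_takel kx; rewrite H /= => H0.
by move: k1; rewrite -H0.
Qed.

Lemma evt_eq (l D : nat) (th : R) (Ll : (1 <= l)%N) (LD : (l <= D)%N) :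
  [set w | forall x : seq nat, in_tree xi w x -> (size x)%:Z = D%:Z ->
    exists k : nat, [/\ (k <= size x)%N, (l%:Z <= k%:Z)%R &
      ((tdeg xi w (take k x))%:R <= th)%R]]
  = ~` \bigcup_N V (consf l th) N [::] D.
Proof.
apply/seteqP; split => w /=.
  move=> HE [N _ /V_char [y [Hy H1 H2]]].
  have [k [Hk1 Hk2 Hk3]] : exists k : nat, [/\ (k <= size y)%N, (l%:Z <= k%:Z)%R &
      ((tdeg xi w (take k y))%:R <= th)%R].
    apply: HE; last by rewrite Hy.
    by move=> i; rewrite Hy => /H2.
  rewrite lez_nat in Hk2.
  have [Hc _] := H1 k (leq_trans Hk1 (eq_leq Hy)).
  move: Hc; rewrite /consf /= Hk2 /= => Hc.
  rewrite tdeg_take // in Hk3; last exact: leq_trans Ll Hk2.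
  by move: (lt_le_trans Hc Hk3); rewrite ltxx.
move=> HU x Hx Hs.
have Hsx : size x = D by apply/eqP; rewrite -eqz_nat Hs.
apply: NNPP => Hne; apply: HU.
exists (\max_(i < D.+1) xi (take i x) w).+1 => //.
apply/V_char; exists x; split => //.
- move=> i Hi; split; last first.
    by rewrite ltnS /=; apply: (@leq_bigmax_cond _ _ _ (Ordinal (Hi : (i < D.+1)%N))).
  rewrite /consf /=; apply/implyP => Hli.
  rewrite -(tdeg_take w (leq_trans Ll Hli)); last by rewrite Hsx.
  rewrite ltNge; apply/negP => Hle; apply: Hne.
  by exists i; split; rewrite ?Hsx ?lez_nat.
- move=> i; rewrite -Hsx => Hi; exact: Hx.
Qed.

Lemma prob_bound (l D : nat) (th m eps : R) :
  iid_offspring P mu xi ->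
  (forall k, 0 <= mu k) -> (forall N, \sum_(k < N) mu k <= 1) ->
  (forall N, \sum_(k < N) k%:R * mu k <= m) ->
  (forall N, \sum_(k < N | th < (k.+1)%:R) k%:R * mu k <= eps) ->
  0 <= eps -> (1 <= l)%N -> (l <= D)%N ->
  ((1 - m ^+ l * eps ^+ (D - l))%:E <=
   P [set w | forall x : seq nat, in_tree xi w x -> (size x)%:Z = D%:Z ->
    exists k : nat, [/\ (k <= size x)%N, (l%:Z <= k%:Z)%R &
      ((tdeg xi w (take k x))%:R <= th)%R]])%E.
Proof.
move=> [hm hiid] mu0 hmu1 hmm heps eps0 Ll LD.
rewrite evt_eq //.
set F := fun N => V (consf l th) N [::] D.
have mF : forall N, measurable (F N) by move=> N; exact: V_meas.
have mU : measurable (\bigcup_N F N) by apply: bigcup_measurable => N _.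
rewrite probability_setC // EFinB; apply: leeB => //.
have ndF : nondecreasing_seq F.
  move=> N M NM; apply/subsetPset => w /V_char [y [H0 H1 H2]]; apply/V_char; exists y; split => //.
  by move=> i Hi; have [Ha Hb] := H1 i Hi; split => //; exact: leq_trans Hb NM.
have hc := nondecreasing_cvg_mu (mu := P) mF mU ndF.
rewrite -(cvg_lim _ hc) //; apply: lime_le; first by apply/cvg_ex; eexists; exact: hc.
apply: nearW => N /=.
have m0 : 0 <= m by have := hmm 0%N; rewrite big_ord0.
pose rho i := if (l <= i)%N then eps else m.
have hrho : forall i N', \sum_(k < N' | consf l th i k) k%:R * mu k <= rho i.
  by move=> i N'; rewrite /consf /rho; case: ifP => _ /=; [exact: heps|exact: hmm].
have rho0 : forall i, 0 <= rho i by move=> i; rewrite /rho; case: ifP.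
have hiid' : forall us ks, uniq us -> size ks = size us ->
    P (Cyl us ks) = (\prod_(i < size us) mu (nth 0%N ks i))%:E.
  by move=> us ks Hu Hs; rewrite -(hiid us ks Hu Hs).
have := @V_bound (consf l th) N rho mu0 hmu1 hrho rho0 hiid' D [::] [::] [::] isT erefl
  ltac:(by []).
have -> : Cyl [::] [::] = setT by apply/seteqP; split.
rewrite setTI big_ord0 mul1r /= => H; apply: le_trans H _.
rewrite lee_fin le_eqVlt; apply/orP; left; apply/eqP.
rewrite -(big_mkord xpredT (fun t => rho (0 + t)%N)) (big_cat_nat (leq0n l) LD) /=.
rewrite (@eq_big_nat _ _ _ 0 l _ (fun _ => m)); last first.
  by move=> i /andP [_ Hi]; rewrite /rho add0n leqNgt Hi.
rewrite (@eq_big_nat _ _ _ l D _ (fun _ => eps)); last first.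
  by move=> i /andP [Hi _]; rewrite /rho add0n Hi.
by rewrite !prodr_const_nat subn0.
Qed.

End Prob.



Section Anal.
Context (R : realType).

Lemma series_le (u : R^nat) : (forall k, 0 <= u k) -> cvgn (series u) ->
  forall N, \sum_(k < N) u k <= limn (series u).
Proof.
move=> u0 cu N.
have := @nondecreasing_cvgn_le _ (series u) _ cu N.
rewrite /series /= big_mkord; apply.
exact: (@nondecreasing_series _ u xpredT 0%N).
Qed.

Lemma sum_tail (f : nat -> R) (m : R) M : (forall k, 0 <= f k) ->
  (forall N, \sum_(k < N) f k <= m) ->
  forall N, \sum_(k < N | (M <= k)%N) f k <= m - \sum_(k < M) f k.
Proof.
move=> f0 hm N; have [HNM|HMN] := leqP N M.
  rewrite big_pred0; first by rewrite subr_ge0.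
  by move=> k; rewrite leqNgt (leq_trans (ltn_ord k) HNM).
rewrite (big_ord_widen_cond N xpredT f (ltnW HMN)) /=.
have E : \sum_(k < N) f k = \sum_(k < N | (M <= k)%N) f k + \sum_(k < N | (k < M)%N) f k.
  rewrite (bigID (fun k : 'I_N => (M <= k)%N)) /=; congr (_ + _).
  by apply: eq_bigl => k; rewrite -ltnNge.
by have := hm N; rewrite E lerBrDr.
Qed.

Lemma num_bound (m c eta eps : R) (l t n : nat) :
  1 < m -> 0 < c -> 0 <= eps -> eps <= eta -> 0 < eta -> eta < 1 -> (0 < n)%N ->
  c * ln (n%:R : R) <= l%:R ->
  (l%:R * (ln (m * expR (2 / c)) / (- ln eta)) <= t%:R) ->
  m ^+ l * eps ^+ t <= (n%:R ^+ 2)^-1.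
Proof.
move=> m1 c0 e0 ee eta0 eta1 n0 hl ht.
have m0 : 0 < m by apply: lt_trans m1.
have n0' : 0 < (n%:R : R) by rewrite ltr0n.
apply: le_trans (_ : m ^+ l * eta ^+ t <= _).
  apply: ler_wpM2l; first by apply: exprn_ge0; apply: ltW.
  by apply: lerXn2r => //; rewrite nnegrE // ltW.
rewrite -(lnK (x := m ^+ l)) ?posrE ?exprn_gt0 //.
rewrite -(lnK (x := eta ^+ t)) ?posrE ?exprn_gt0 //.
rewrite -(lnK (x := (n%:R ^+ 2)^-1)) ?posrE ?invr_gt0 ?exprn_gt0 //.
rewrite -expRD ler_expR lnXn // lnXn // lnV ?posrE ?exprn_gt0 // lnXn //.
have hb : ln eta < 0 by apply: ln_lt0; rewrite eta0.
have hA : ln (m * expR (2 / c)) = ln m + 2 / c.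
  by rewrite lnM ?posrE ?expR_gt0 // expRK.
rewrite hA in ht.
move: ht hl hb; set a := ln m; set b := ln eta; set L := ln (n%:R : R) => ht hl hb.
have bn0 : b != 0 by rewrite lt_eqF.
have c0' : c != 0 by rewrite gt_eqF.
have e1 : b * (l%:R * ((a + 2 / c) / - b)) = - (a * l%:R) - l%:R * (2 / c).
  by field; rewrite c0' bn0.
have e2 := ler_wnM2l (ltW hb) ht.
rewrite e1 in e2.
have e3 : L * 2 <= l%:R * (2 / c).
  have e3' : L <= l%:R / c by rewrite ler_pdivlMr // mulrC.
  have -> : l%:R * (2 / c) = (l%:R / c) * 2 by rewrite mulrCA mulrC.
  by apply: ler_wpM2r.
rewrite -[a *+ l]mulr_natr -[b *+ t]mulr_natr -[L *+ 2]mulr_natr.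
move: e2 e3; set u := b * t%:R; set v := l%:R * (2 / c); set w := a * l%:R.
move=> e2 e3; apply: le_trans (lerD (lexx w) e2) _.
by rewrite addrA subrr add0r lerN2.
Qed.

End Anal.

Unset Implicit Arguments.


Theorem mainTheorem14 (R : realType) (mu : nat -> R) (L : nat -> int) (c : R) :
  offspring_dist mu ->
  0 < c -> (forall n : nat, (0 < n)%N -> c * ln (n%:R : R) <= (L n)%:~R) ->
  exists delta : nat -> R,
    delta @ \oo --> (0 : R) /\
    \forall n \near \oo,
      forall (d : measure_display) (T : measurableType d)
        (P : probability T R) (xi : seq nat -> T -> nat),
      iid_offspring P mu xi ->
      ((1 - (n%:R ^+ 2)^-1)%:E <=
       P [set w | forall x : seq nat, in_tree xi w x ->
            (size x)%:Z = Num.ceil ((L n)%:~R * (1 + delta n)) ->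
            exists k : nat, [/\ (k <= size x)%N, (L n <= k%:Z)%R &
              ((tdeg xi w (take k x))%:R <= ln (ln (n%:R : R)))%R]])%E.
Proof.
move=> [mu0 [hS1 [mu00 [cvm m1]]]] c0 hL.
pose f := fun l : nat => l%:R * mu l.
pose m := limn (series f).
have f0 : forall k, 0 <= f k by move=> k; apply: mulr_ge0 (ler0n _ _) (mu0 k).
have hmm : forall N, \sum_(k < N) f k <= m := series_le f0 cvm.
have hmu1 : forall N, \sum_(k < N) mu k <= 1.
  by move=> N; have := series_le mu0 (cvgP _ hS1) N; rewrite (cvg_lim _ hS1).
pose th n := ln (ln (n%:R : R)).
pose eps n := m - \sum_(k < Num.truncn (th n)) f k.
have eps0 : forall n, 0 <= eps n by move=> n; rewrite subr_ge0.
have heps : forall n N, \sum_(k < N | th n < (k.+1)%:R) f k <= eps n.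
  move=> n N; under eq_bigl => k do rewrite -truncn_le_nat.
  exact: sum_tail.
pose eta n := eps n + (n.+1%:R)^-1.
have eta0 : forall n, 0 < eta n.
  by move=> n; apply: ltr_wpDl => //; rewrite invr_gt0 ltr0n.
pose A := m * expR (2 / c).
have m1' : 1 < m := m1.
have m0 : 0 <= m by apply: ltW; apply: lt_trans m1'.
have A1 : 1 < A.
  have e1 : 1 < expR (2 / c) by rewrite expR_gt1 divr_gt0.
  apply: (lt_le_trans m1'); rewrite /A ler_peMr //; exact: ltW.
have lA : 0 < ln A by apply: ln_gt0.
pose delta n := ln A / (- ln (eta n)).
have hM : (fun n => Num.truncn (th n)) @ \oo --> \oo.
  move=> Q [N _ HQ].
  exists (Num.truncn (expR (expR (N%:R : R)))).+1 => // n /= Hn; apply: HQ => /=.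
  rewrite Num.Theory.truncn_lt_nat ?ltW ?expR_gt0 // in Hn.
  have h1 : expR (N%:R) < ln (n%:R : R).
    rewrite -(expRK (expR N%:R)) ltr_ln ?posrE ?expR_gt0 //.
    exact: lt_trans (expR_gt0 _) Hn.
  have h2 : N%:R < th n.
    rewrite /th -(expRK N%:R) ltr_ln ?posrE ?expR_gt0 //.
    exact: lt_trans (expR_gt0 _) h1.
  rewrite Num.Theory.truncn_ge_nat; first exact: ltW h2.
  exact: le_trans (ler0n _ N) (ltW h2).
have eps_cvg : eps @ \oo --> 0.
  have h1 := cvg_comp _ _ hM cvm.
  have -> : eps = fun n => m - (series f \o (fun n => Num.truncn (th n))) n.
    by apply: funext => n; rewrite /eps /series /= big_mkord.
  rewrite -(subrr m); apply: cvgB; [exact: cvg_cst|exact: h1].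
have eta_cvg : eta @ \oo --> 0.
  rewrite -[0]addr0; apply: cvgD; [exact: eps_cvg|exact: cvg_harmonic].
exists delta; split.
  apply/cvgr0Pnorm_lt => e e0.
  have := eta_cvg; move/cvgr0Pnorm_lt/(_ (expR (- (ln A / e))) (expR_gt0 _)).
  apply: filterS => n; rewrite gtr0_norm // => Hn.
  have hl : ln (eta n) < - (ln A / e).
    by rewrite -ltr_expR lnK // posrE.
  have hl' : 0 < - ln (eta n).
    rewrite oppr_gt0; apply: (lt_trans hl); rewrite oppr_lt0; exact: divr_gt0.
  rewrite gtr0_norm; last by apply: divr_gt0.
  rewrite ltr_pdivrMr //; rewrite ltrNr ltr_pdivrMr // in hl.
  by rewrite mulrC.
have Hn1 : \forall n \near \oo, (1 < n)%N by exists 2%N.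
have Heta : \forall n \near \oo, eta n < 1.
  have := eta_cvg; move/cvgr0Pnorm_lt/(_ 1 ltr01).
  by apply: filterS => n; rewrite gtr0_norm.
near=> n.
have n1 : (1 < n)%N by near: n; exact: Hn1.
have etan : eta n < 1 by near: n; exact: Heta.
move=> d T P xi Hiid.
have n0 : (0 < n)%N by apply: ltn_trans n1.
have lnn : 0 < ln (n%:R : R) by apply: ln_gt0; rewrite ltr1n.
have HLn := hL n n0.
have Ln0 : 0 < L n.
  rewrite -(ltr0z R); apply: lt_le_trans HLn; exact: mulr_gt0.
have [l Hl] : exists l : nat, L n = l%:Z by exists `|L n|%N; rewrite gez0_abs // ltW.
have l1 : (1 <= l)%N by rewrite -(ltz_nat 0) -Hl.
have lneta : ln (eta n) < 0 by apply: ln_lt0; rewrite eta0 etan.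
have dpos : 0 < delta n by apply: divr_gt0 => //; rewrite oppr_gt0.
have Hceil := Num.Theory.ceil_ge ((L n)%:~R * (1 + delta n)).
have D0 : 0 <= Num.ceil ((L n)%:~R * (1 + delta n)).
  rewrite -(ler0z R); apply: le_trans Hceil.
  by apply: mulr_ge0; [rewrite ler0z ltW|apply: addr_ge0 => //; exact: ltW].
have [Dn HD] : exists Dn : nat, Num.ceil ((L n)%:~R * (1 + delta n)) = Dn%:Z.
  by exists `|Num.ceil ((L n)%:~R * (1 + delta n))|%N; rewrite gez0_abs.
rewrite HD Hl.
rewrite HD Hl in Hceil; rewrite Hl in HLn.
have Hceil' : l%:R * (1 + delta n) <= Dn%:R by move: Hceil; rewrite !pmulrn.
have lD : (l <= Dn)%N.
  rewrite -(ler_nat R); apply: le_trans Hceil'.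
  by rewrite ler_peMr // ?ler0n // lerDl ltW.
have := @prob_bound R d T P mu xi (proj1 Hiid) l Dn (th n) m (eps n) Hiid
  mu0 hmu1 hmm (heps n) (eps0 n) l1 lD.
apply: le_trans; rewrite lee_fin lerD2l lerN2.
apply: (@num_bound R m c (eta n) (eps n) l (Dn - l) n) => //.
- by rewrite /eta lerDl invr_ge0 ler0n.
- rewrite natrB // lerBrDl -[X in X + _]mulr1 -mulrDr.
  exact: Hceil'.
Unshelve. all: by end_near.
Qed.
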